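(* Let $n\ge 2$, $A\in\mathrm{Mat}_{n\times n}(\mathbb{R})$, and let $q\in\mathbb{R}^n$ be a formal equilibrium of the replicator vector field $X_A$. Let $B=-EAE^t$, $\eta_q(u)_i=q_i-\frac{e^{u_i}}{1+\sum_{j=1}^{n-1}e^{u_j}}$ ($u\in\mathbb{R}^{n-1}$), and $\tilde X_B(u)=B\eta_q(u)$. Suppose $D=(d_{ij})\in\mathrm{Mat}_{(n-1)\times(n-1)}(\mathbb{R})$ satisfies: (1) $DB$ is anti-symmetric; (2) $D^tQ_1$ is diagonal, where $(Q_1)_{ij}=q_i-\delta_{ij}$ (equivalently, the 1-form $(1+\sum_i e^{u_i})D^t\eta_q(u)$ is closed). Let $$H_D(u)=\sum_{i=1}^{n-1}\Big(\sum_{k=1}^{n-1}d_{ki}q_k\Big)u_i+\sum_{i=1}^{n-1}\Big(\Big(\sum_{k=1}^{n-1}d_{ki}q_k\Big)-d_{ii}\Big)e^{u_i},$$ $\mathbf{B}(u)=(1+\sum_{i=1}^{n-1}e^{u_i})B$, $\mathbf{D}^t(u)=(1+\sum_{i=1}^{n-1}e^{u_i})D^t$, and $\tilde Y_B=(1+\sum_{i=1}^{n-1}e^{u_i})\tilde X_B$. Then $L_{(\mathbf{B},\mathbf{D}^t)}=\{(\mathbf{B}(u)z,\mathbf{D}^t(u)z): z\in\mathbb{R}^{n-1}\}$ is a big-isotropic structure on $\mathbb{R}^{n-1}$ (a Dirac structure when $\ker B\cap\ker D^t=\{0\}$), and $(\tilde Y_B,dH_D)$ is a Hamiltonian system with respect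 to it, i.e. $(\tilde Y_B,dH_D)$ is a section of $L_{(\mathbf{B},\mathbf{D}^t)}$.
   Context: The replicator vector field is $X_A(x)_i=x_i((Ax)_i-x^tAx)$ on $\Delta^{n-1}=\{x\in\mathbb{R}^n_{\ge0}:\sum x_i=1\}$. A formal equilibrium is $q\in\mathbb{R}^n$ with $\sum_i q_i=1$ and $(Aq)_i=(Aq)_j$ for all $i,j$. $E=[-I_{n-1}\mid\mathbb{1}]$ ($(n-1)\times n$). $\tilde X_B$ is the pullback of $X_A$ to $\mathbb{R}^{n-1}$ by $\phi(u)=\big(\frac{e^{u_1}}{1+\sum_j e^{u_j}},\dots,\frac{e^{u_{n-1}}}{1+\sum_j e^{u_j}},\frac{1}{1+\sum_j e^{u_j}}\big)$. On $\mathbb{T}M=TM\oplus T^*M$ use the pairing $\frac12(\beta(X)+\alpha(Y))$ and Courant bracket $\big([X,Y],\mathcal{L}_X\beta-\mathcal{L}_Y\alpha+\frac12 d(\alpha(Y)-\beta(X))\big)$; a big-isotropic structure is an isotropic subbundle closed under the Courant bracket, a Dirac structure a maximal isotropic one closed under the bracket. A vector field $X$ is Hamiltonian with Hamiltonian $H$ with respect to such $L$ if $(X,dH)\in L$. *)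

(* Defs.v *)
(* R : realType, points of R^m are column
   vectors 'cV[R]_m (a normed space), vector fields / 1-forms on R^m are
   maps 'cV_m -> 'cV_m (components in the standard (co)frame). *)
From HB Require Import structures.
From mathcomp Require Import all_boot all_order all_algebra.
From mathcomp Require Import all_classical all_reals all_analysis.
Set Implicit Arguments. Unset Strict Implicit. Unset Printing Implicit Defensive.
Import Order.TTheory GRing.Theory Num.Theory.
Import numFieldNormedType.Exports.
Local Open Scope classical_set_scope.
Local Open Scope ring_scope.

Section Defs.
Variable R : realType.

Fixpoint Ck (m : nat) (W : normedModType R) (k : nat) (f : 'cV[R]_m -> W) : Prop :=
  match k with
  | 0 => continuous f
  | k.+1 => (forall x, differentiable f x) /\
            (forall v : 'cV[R]_m, Ck k (fun x => derive f x v))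
  end.
Definition smooth (m : nat) (W : normedModType R) (f : 'cV[R]_m -> W) :=
  forall k, Ck k f.

Definition ebasis (m : nat) (j : 'I_m) : 'cV[R]_m := delta_mx j 0.

Definition contr (m : nat) (a y : 'cV[R]_m) : R := \sum_i a i 0 * y i 0.

Definition dfun (m : nat) (f : 'cV[R]_m -> R^o) (u : 'cV[R]_m) : 'cV[R]_m :=
  \col_i derive f u (ebasis i).

Definition lie_bracket (m : nat) (X Y : 'cV[R]_m -> 'cV[R]_m) u : 'cV[R]_m :=
  derive Y u (X u) - derive X u (Y u).

Definition lie_der1 (m : nat) (X b : 'cV[R]_m -> 'cV[R]_m) u : 'cV[R]_m :=
  derive b u (X u) + \col_i contr (b u) (derive X u (ebasis i)).

(* generalized tangent bundle TM + T*M over R^m: pairs (vector, covector) *)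
Definition pairing (m : nat) (p1 p2 : 'cV[R]_m * 'cV[R]_m) : R :=
  (contr p2.2 p1.1 + contr p1.2 p2.1) / 2.

Definition courant (m : nat) (X a Y b : 'cV[R]_m -> 'cV[R]_m) u :
    'cV[R]_m * 'cV[R]_m :=
  (lie_bracket X Y u,
   lie_der1 X b u - lie_der1 Y a u
   + 2^-1 *: dfun (fun v => (contr (a v) (Y v) - contr (b v) (X v) : R^o)) u).

Definition distrib (m : nat) := 'cV[R]_m -> set ('cV[R]_m * 'cV[R]_m).

Definition lin_subspace (m : nat) (W : set ('cV[R]_m * 'cV[R]_m)) :=
  W (0, 0) /\
  (forall p1 p2, W p1 -> W p2 -> W (p1.1 + p2.1, p1.2 + p2.2)) /\
  (forall (c : R) p, W p -> W (c *: p.1, c *: p.2)).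

Definition isotropic_set (m : nat) (W : set ('cV[R]_m * 'cV[R]_m)) :=
  forall p1 p2, W p1 -> W p2 -> pairing p1 p2 = 0.

Definition lin_comb (m k : nat) (c : 'I_k -> R) (s : 'I_k -> 'cV[R]_m * 'cV[R]_m) :
    'cV[R]_m * 'cV[R]_m :=
  (\sum_i c i *: (s i).1, \sum_i c i *: (s i).2).

Definition smooth_subbundle (m : nat) (L : distrib m) :=
  (forall u, lin_subspace (L u)) /\
  forall u0, exists U : set 'cV[R]_m, open U /\ U u0 /\
    exists (k : nat) (s : 'I_k -> 'cV[R]_m -> 'cV[R]_m * 'cV[R]_m),
      (forall i, smooth (fun u => (s i u).1) /\ smooth (fun u => (s i u).2)) /\
      forall u, U u ->
        (forall p, L u p <-> exists c, p = lin_comb c (fun i => s i u)) /\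
        (forall c, lin_comb c (fun i => s i u) = (0, 0) -> forall i, c i = 0).

Definition courant_closed (m : nat) (L : distrib m) :=
  forall X a Y b : 'cV[R]_m -> 'cV[R]_m,
    smooth X -> smooth a -> smooth Y -> smooth b ->
    (forall u, L u (X u, a u)) -> (forall u, L u (Y u, b u)) ->
    forall u, L u (courant X a Y b u).

Definition big_isotropic (m : nat) (L : distrib m) :=
  smooth_subbundle L /\ (forall u, isotropic_set (L u)) /\ courant_closed L.

Definition maximal_isotropic_set (m : nat) (W : set ('cV[R]_m * 'cV[R]_m)) :=
  isotropic_set W /\
  forall W', lin_subspace W' -> isotropic_set W' -> W `<=` W' -> W' = W.

Definition dirac_structure (m : nat) (L : distrib m) :=
  smooth_subbundle L /\ (forall u, maximal_isotropic_set (L u)) /\ courant_closed L.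

Definition hamiltonian (m : nat) (L : distrib m) (X : 'cV[R]_m -> 'cV[R]_m)
    (H : 'cV[R]_m -> R^o) :=
  forall u, L u (X u, dfun H u).

(* index i : 'I_m (i.e. i+1 in 1..n-1) viewed inside 'I_(m.+1) = 'I_n *)
Definition wd (m : nat) (i : 'I_m) : 'I_m.+1 := widen_ord (leqnSn m) i.

Definition formal_equilibrium (n : nat) (A : 'M[R]_n) (q : 'cV[R]_n) :=
  \sum_i q i 0 = 1 /\ forall i j, (A *m q) i 0 = (A *m q) j 0.

Definition Emat (m : nat) : 'M[R]_(m, m.+1) :=
  \matrix_(i < m, j < m.+1)
    (if (j : nat) == m then 1 else if (j : nat) == (i : nat) then -1 else 0).

Definition Bmat (m : nat) (A : 'M[R]_m.+1) : 'M[R]_m :=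
  - (Emat m *m A *m (Emat m)^T).

Definition Zfac (m : nat) (u : 'cV[R]_m) : R := 1 + \sum_j expR (u j 0).

Definition eta (m : nat) (q : 'cV[R]_m.+1) (u : 'cV[R]_m) : 'cV[R]_m :=
  \col_i (q (wd i) 0 - expR (u i 0) / Zfac u).

Definition Xtilde (m : nat) (A : 'M[R]_m.+1) (q : 'cV[R]_m.+1) u : 'cV[R]_m :=
  Bmat A *m eta q u.

Definition Ytilde (m : nat) (A : 'M[R]_m.+1) (q : 'cV[R]_m.+1) u : 'cV[R]_m :=
  Zfac u *: Xtilde A q u.

Definition Q1 (m : nat) (q : 'cV[R]_m.+1) : 'M[R]_m :=
  \matrix_(i < m, j < m) (q (wd i) 0 - (i == j)%:R).

Definition HD (m : nat) (D : 'M[R]_m) (q : 'cV[R]_m.+1) (u : 'cV[R]_m) : R^o :=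
  \sum_i (\sum_k D k i * q (wd k) 0) * u i 0
  + \sum_i ((\sum_k D k i * q (wd k) 0) - D i i) * expR (u i 0).

Definition LBD (m : nat) (B D : 'M[R]_m) : distrib m :=
  fun u => [set p | exists z : 'cV[R]_m,
               p = (Zfac u *: (B *m z), Zfac u *: (D^T *m z))].

End Defs.

(* Main.v *)
Require Import Defs.
From HB Require Import structures.
From mathcomp Require Import all_boot all_order all_algebra.
From mathcomp Require Import all_classical all_reals all_analysis.
From mathcomp Require Import ring lra.
Import Order.TTheory GRing.Theory Num.Theory.
Import numFieldNormedType.Exports.
Local Open Scope ring_scope.

Section Helpers.
Variable R : realType.

Lemma D_comp (V : normedModType R) p r (G : V -> 'M[R]_(p,r)) u v i j :
  derivable G u v -> 'D_v (fun x => G x i j) u = ('D_v G u) i j.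
Proof. by move=> dG; rewrite derive_mx // mxE. Qed.

Lemma derivable_coordf (V : normedModType R) p r (G : V -> 'M[R]_(p,r)) u v i j :
  derivable G u v -> derivable (fun x => G x i j) u v.
Proof. by move/derivable_mxP. Qed.

Lemma derive_mulmx (V : normedModType R) p r s (K : 'M[R]_(s,p)) (G : V -> 'M[R]_(p,r)) u v :
  derivable G u v -> derivable (fun x => K *m G x) u v /\
  'D_v (fun x => K *m G x) u = K *m 'D_v G u.
Proof.
move=> dG.
have eq i j : (fun x => (K *m G x) i j) = \sum_k (fun x => K i k * G x k j).
  by apply/funext => x; rewrite mxE fct_sumE.
have dk i j k : derivable (fun x => K i k * G x k j) u v.
  rewrite (_ : (fun x => _) = K i k \*: (fun x => G x k j)) //.
  by apply: derivableZ; apply: derivable_coordf.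
have dij : forall i j, derivable (fun x => (K *m G x) i j) u v.
  by move=> i j; rewrite eq; apply: derivable_sum.
have dKG : derivable (fun x => K *m G x) u v by apply/derivable_mxP.
split => //.
apply/matrixP => i j; rewrite -D_comp // eq derive_sum // !mxE.
apply: eq_bigr => k _.
rewrite (_ : (fun x => _) = K i k \*: (fun x => G x k j)) //.
by rewrite deriveZ ?D_comp //; apply: derivable_coordf.
Qed.

Lemma derive_contr (V : normedModType R) m (a Y : V -> 'cV[R]_m) u v :
  derivable a u v -> derivable Y u v ->
  derivable (fun x => contr (a x) (Y x) : R^o) u v /\
  'D_v (fun x => contr (a x) (Y x) : R^o) u = contr (a u) ('D_v Y u) + contr ('D_v a u) (Y u).
Proof.
move=> da dY.
have eq : (fun x => contr (a x) (Y x) : R^o) = \sum_k ((fun x => a x k 0) * (fun x => Y x k 0)).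
  by apply/funext => x; rewrite /contr fct_sumE.
have dk k : derivable ((fun x => a x k 0) * (fun x => Y x k 0)) u v.
  by apply: derivableM; apply: derivable_coordf.
rewrite eq; split; first by apply: derivable_sum.
rewrite derive_sum // /contr -big_split /=; apply: eq_bigr => k _.
rewrite deriveM; try by apply: derivable_coordf.
rewrite !D_comp //; congr (_ + _) => //; exact: mulrC.
Qed.

Lemma derive_coord m (u v : 'cV[R]_m) i :
  derivable (fun x : 'cV[R]_m => x i 0) u v /\ 'D_v (fun x : 'cV[R]_m => x i 0) u = v i 0.
Proof.
have did : derivable (@id 'cV[R]_m) u v by apply: derivable_id.
split; first exact: (@derivable_coordf _ _ _ id u v i 0 did).
by rewrite (@D_comp _ _ _ id u v i 0 did) derive_id.
Qed.

Lemma derive_expcoord m (u v : 'cV[R]_m) i :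
  derivable (fun x : 'cV[R]_m => expR (x i 0)) u v /\
  'D_v (fun x : 'cV[R]_m => expR (x i 0)) u = expR (u i 0) * v i 0.
Proof.
have dc : differentiable (fun x : 'cV[R]_m => x i 0) u by apply: differentiable_coord.
have de : differentiable (@expR R) (u i 0) by apply/derivable1_diffP/derivable_expR.
have dce : differentiable (expR \o (fun x : 'cV[R]_m => x i 0)) u.
  exact: differentiable_comp.
split; first exact: diff_derivable.
have -> : (fun x : 'cV[R]_m => expR (x i 0)) = expR \o (fun x : 'cV[R]_m => x i 0) by [].
rewrite deriveE // diff_comp // diff1E //= -deriveE // (derive_coord _ u v i).2.
rewrite derive1E.
have -> : 'D_1 expR (u i 0) = expR (u i 0) :> R.
  exact: (congr1 (fun f => f (u i 0)) (derive_expR R)).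
exact: mulrC.
Qed.

Lemma derive_HD m (D : 'M[R]_m) (q : 'cV[R]_m.+1) (u v : 'cV[R]_m) :
  'D_v (HD D q) u =
  \sum_i (\sum_k D k i * q (wd k) 0) * v i 0
  + \sum_i ((\sum_k D k i * q (wd k) 0) - D i i) * (expR (u i 0) * v i 0).
Proof.
set c := fun i => \sum_k D k i * q (wd k) 0.
have eq : HD D q = (\sum_i (c i \*: (fun x : 'cV[R]_m => x i 0 : R^o)))
   + (\sum_i ((c i - D i i) \*: (fun x : 'cV[R]_m => expR (x i 0) : R^o))).
  apply/funext => x; rewrite /HD /= !fct_sumE //.
have d1 i : derivable (c i \*: (fun x : 'cV[R]_m => x i 0 : R^o)) u v.
  by apply: derivableZ; exact: (derive_coord _ u v i).1.
have d2 i : derivable ((c i - D i i) \*: (fun x : 'cV[R]_m => expR (x i 0) : R^o)) u v.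
  by apply: derivableZ; exact: (derive_expcoord _ u v i).1.
rewrite eq deriveD; try by apply: derivable_sum.
rewrite !derive_sum //; congr (_ + _); apply: eq_bigr => i _.
  by rewrite deriveZ ?(derive_coord _ u v i).2 //; exact: (derive_coord _ u v i).1.
by rewrite deriveZ ?(derive_expcoord _ u v i).2 //; exact: (derive_expcoord _ u v i).1.
Qed.

Lemma sum_delta m (f : 'I_m -> R) k : \sum_j f j * (j == k)%:R = f k.
Proof.
rewrite (bigD1 k) //= eqxx mulr1 big1 ?addr0 // => j /negbTE ->; by rewrite mulr0.
Qed.

Lemma ebasisE m (i k : 'I_m) : ebasis R i k 0 = (k == i)%:R :> R.
Proof. by rewrite /ebasis mxE eqxx andbT. Qed.

Lemma Zfac_gt0 m (u : 'cV[R]_m) : 0 < Zfac u.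
Proof.
rewrite /Zfac; have : 0 <= \sum_j expR (u j 0) by apply: sumr_ge0 => j _; exact/ltW/expR_gt0.
lra.
Qed.

Lemma ham_part m (A : 'M[R]_m.+1) (q : 'cV[R]_m.+1) (D : 'M[R]_m) :
  is_diag_mx ((D^T) *m Q1 q) -> hamiltonian (LBD (Bmat A) D) (Ytilde A q) (HD D q).
Proof.
move=> /is_diag_mxP hd u; exists (Defs.eta q u); congr pair.
apply/matrixP => i j; rewrite (ord1 j) !mxE derive_HD.
set c := fun i => \sum_k D k i * q (wd k) 0.
have hk : forall k, k != i -> D k i = c i.
  move=> k ki; have := hd i k; rewrite !mxE.
  have -> : \sum_j D^T i j * Q1 q j k = c i - D k i.
    rewrite /c -(sum_delta _ (fun j => D j i) k) -sumrB; apply: eq_bigr => l _.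
    by rewrite !mxE mulrBr.
  move=> h; apply/eqP; rewrite eq_sym -subr_eq0 h //.
  by rewrite eq_sym.
under eq_bigr do rewrite ebasisE.
under [X in _ + X = _]eq_bigr do rewrite ebasisE mulrA.
rewrite !sum_delta.
set e := fun k => expR (u k 0).
have Z0 : Zfac u != 0 by rewrite gt_eqF // Zfac_gt0.
have key : \sum_k (c i - D k i) * e k = (c i - D i i) * e i.
  rewrite (bigD1 i) //= big1 ?addr0 // => k ki; by rewrite hk // subrr mul0r.
have rhs : Zfac u * \sum_k D^T i k * Defs.eta q u k 0 = Zfac u * c i - \sum_k D k i * e k.
  rewrite /c mulr_sumr [in RHS]mulr_sumr -sumrB; apply: eq_bigr => k _; rewrite !mxE /e.
  by field.
rewrite rhs -key /Zfac mulrDl mul1r mulr_suml -addrA; congr (_ + _).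
rewrite -sumrB; apply: eq_bigr => k _; rewrite /e; ring.
Qed.
End Helpers.
Section LA.
Variable R : realType.
Variable m : nat.
Variables B D : 'M[R]_m.

Definition Vset (p : 'cV[R]_m * 'cV[R]_m) := exists z, p = (B *m z, D^T *m z).
Definition Mm : 'M[R]_(m, m + m) := row_mx B^T D.
Definition rv (p : 'cV[R]_m * 'cV[R]_m) : 'rV[R]_(m + m) := row_mx p.1^T p.2^T.
Definition unrv (w : 'rV[R]_(m + m)) : 'cV[R]_m * 'cV[R]_m := ((lsubmx w)^T, (rsubmx w)^T).

Lemma rvK p : unrv (rv p) = p.
Proof. by case: p => x y; rewrite /unrv /rv /= row_mxKl row_mxKr !trmxK. Qed.

Lemma unrvK w : rv (unrv w) = w.
Proof. by rewrite /unrv /rv /= !trmxK hsubmxK. Qed.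

Lemma LBD_V u p : LBD B D u p <-> Vset p.
Proof.
have Z0 : Zfac u != 0.
  rewrite gt_eqF // /Zfac.
  have : 0 <= \sum_j expR (u j 0) by apply: sumr_ge0 => j _; exact/ltW/expR_gt0.
  lra.
split.
  by case=> z ->; exists (Zfac u *: z); rewrite !scalemxAr.
case=> z ->; exists ((Zfac u)^-1 *: z).
by rewrite -!scalemxAr !scalerA divff // !scale1r.
Qed.

Lemma Vset_rv p : Vset p <-> (rv p <= Mm)%MS.
Proof.
split.
  case=> z ->; apply/submxP; exists z^T.
  by rewrite /rv /Mm mul_mx_row /= !trmx_mul trmxK.
move/submxP=> [w] e; exists w^T.
by rewrite -[p]rvK e /Mm mul_mx_row /unrv row_mxKl row_mxKr !trmx_mul !trmxK.
Qed.

Lemma contrE (a y : 'cV[R]_m) : contr a y = (a^T *m y) 0 0.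
Proof. by rewrite /contr mxE; apply: eq_bigr => i _; rewrite mxE. Qed.

Lemma Vset_iso : (D *m B)^T = - (D *m B) ->
  forall p1 p2, Vset p1 -> Vset p2 -> contr p2.2 p1.1 + contr p1.2 p2.1 = 0.
Proof.
move=> anti p1 p2 [z ->] [w ->] /=; rewrite !contrE !trmx_mul !trmxK.
have -> : (z^T *m D *m (B *m w)) 0 0 = ((z^T *m D *m (B *m w))^T) 0 0 by rewrite [RHS]mxE.
rewrite !trmx_mul !trmxK !mulmxA -[w^T *m B^T *m D^T]mulmxA -trmx_mul anti.
rewrite mulmxN mulNmx !mulmxA; set X := (w^T *m D *m B *m z); by rewrite [X in _ + X]mxE subrr.
Qed.


Definition RB := row_base Mm.
Definition frame (i : 'I_(\rank Mm)) : 'cV[R]_m * 'cV[R]_m := unrv (row i RB).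

Lemma lin_comb_frame (c : 'I_(\rank Mm) -> R) :
  lin_comb c frame = unrv (\row_i c i *m RB).
Proof.
rewrite /lin_comb /frame /unrv /=; congr pair; apply/matrixP => k l;
  rewrite !mxE summxE; apply: eq_bigr => i _; rewrite !mxE //.
Qed.

Lemma span_frame p : Vset p <-> exists c, p = lin_comb c frame.
Proof.
rewrite Vset_rv; split.
  rewrite -(eq_row_base Mm) => /submxP [w e]; exists (fun i => w 0 i).
  rewrite lin_comb_frame -[p]rvK e; congr unrv; congr (_ *m _).
  by apply/matrixP => i j; rewrite (ord1 i) mxE.
case=> c ->; rewrite lin_comb_frame unrvK -(eq_row_base Mm).
by apply/submxP; exists (\row_i c i).
Qed.

Lemma indep_frame c : lin_comb c frame = (0, 0) -> forall i, c i = 0.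
Proof.
rewrite lin_comb_frame => e i.
have : \row_i c i *m RB = 0 *m RB.
  by rewrite mul0mx -[_ *m _]unrvK e /rv /= !trmx0 row_mx0.
move/(row_free_inj (row_base_free Mm))/matrixP/(_ 0 i); rewrite !mxE //.
Qed.

Definition Cm := cokermx Mm.
Definition K1 : 'M[R]_(m + m, m) := (usubmx Cm)^T.
Definition K2 : 'M[R]_(m + m, m) := (dsubmx Cm)^T.

Lemma Vset_K p : Vset p <-> K1 *m p.1 + K2 *m p.2 = 0.
Proof.
rewrite Vset_rv submxE -[Cm in rv p *m Cm]vsubmxK /rv mul_row_col.
have -> : p.1^T *m usubmx Cm + p.2^T *m dsubmx Cm = (K1 *m p.1 + K2 *m p.2)^T.
  by rewrite raddfD /= !trmx_mul !trmxK.
split; first by move/eqP => /(congr1 trmx); rewrite trmxK trmx0.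
by move=> ->; rewrite trmx0.
Qed.


Lemma rowfree_rowmx (X Y : 'M[R]_m) :
  (forall w : 'rV[R]_m, w *m X = 0 -> w *m Y = 0 -> w = 0) -> row_free (row_mx X Y).
Proof.
move=> h; rewrite -kermx_eq0; apply/eqP/row_matrixP => i; rewrite row0.
have : row i (kermx (row_mx X Y)) *m row_mx X Y = 0 by rewrite -row_mul mulmx_ker row0.
rewrite mul_mx_row => /eqP; rewrite row_mx_eq0 => /andP[/eqP e1 /eqP e2]; exact: h.
Qed.

Lemma mul_ebasis (A : 'M[R]_m) j k : (A *m ebasis R j) k 0 = A k j.
Proof.
rewrite mxE (bigD1 j) //= big1 ?addr0; first by rewrite /ebasis mxE !eqxx mulr1.
by move=> l /negbTE lj; rewrite /ebasis mxE lj mulr0.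
Qed.

Definition Nm : 'M[R]_(m + m, m) := col_mx D^T B.

Lemma Vmax : (D *m B)^T = - (D *m B) ->
  (forall z : 'cV[R]_m, B *m z = 0 -> D^T *m z = 0 -> z = 0) ->
  forall p, (forall z : 'cV[R]_m, contr (D^T *m z) p.1 + contr p.2 (B *m z) = 0) -> Vset p.
Proof.
move=> anti inj p h.
have trz (w : 'rV[R]_m) : w^T = 0 -> w = 0 by move/(congr1 trmx); rewrite trmxK trmx0.
have rfM : row_free Mm.
  apply: rowfree_rowmx => w e1 e2; apply: trz; apply: inj.
    by rewrite -[B]trmxK -trmx_mul e1 trmx0.
  by rewrite -trmx_mul e2 trmx0.
have rfN : row_free Nm^T.
  rewrite /Nm tr_col_mx trmxK; apply: rowfree_rowmx => w e1 e2; apply: trz; apply: inj.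
    by rewrite -[B]trmxK -trmx_mul e2 trmx0.
  by rewrite -trmx_mul e1 trmx0.
have sub : (Mm <= kermx Nm)%MS.
  by apply/sub_kermxP; rewrite /Mm /Nm mul_row_col -trmx_mul anti addNr.
have rk : \rank (kermx Nm) = m.
  by rewrite mxrank_ker -mxrank_tr (eqP rfN) addnK.
have sub2 : (kermx Nm <= Mm)%MS by rewrite -(mxrank_leqif_sup sub).2 rk (eqP rfM).
apply/Vset_rv; apply: submx_trans sub2; apply/sub_kermxP.
apply/rowP => j; rewrite /rv /Nm mul_row_col !mxE.
apply: (etrans _ (h (ebasis R j))); rewrite /contr; congr (_ + _); apply: eq_bigr => k _.
  by rewrite mul_ebasis !mxE mulrC.
by rewrite mul_ebasis !mxE.
Qed.

End LA.

Section Main.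
Variable R : realType.

Lemma smooth_cst m (W : normedModType R) (c : W) : smooth (fun _ : 'cV[R]_m => c).
Proof.
move=> k; elim: k c => [|k IH] c /=; first exact: cst_continuous.
split; first by move=> x; exact: differentiable_cst.
move=> v; have -> : (fun x => derive (fun _ : 'cV[R]_m => c) x v) = (fun _ => 0).
  by apply/funext => x; exact: (derive_cst c x v).
exact: IH.
Qed.

Lemma smooth_der m (f : 'cV[R]_m -> 'cV[R]_m) : smooth f -> forall x v, derivable f x v.
Proof. by move=> sf x v; case: (sf 1%N) => df _; exact: diff_derivable. Qed.

Lemma der_V m (B D : 'M[R]_m) (X a : 'cV[R]_m -> 'cV[R]_m) :
  (forall x v, derivable X x v) -> (forall x v, derivable a x v) ->
  (forall u, Vset R _ B D (X u, a u)) -> forall u v, Vset R _ B D ('D_v X u, 'D_v a u).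
Proof.
move=> dX da h u v; apply/Vset_K => /=.
have F0 : (fun x => K1 R _ B D *m X x) + (fun x => K2 R _ B D *m a x) = cst 0.
  by apply/funext => x /=; have := (Vset_K R _ B D (X x, a x)).1 (h x).
have := congr1 (fun F => 'D_v F u) F0 => /=.
have e1 := derive_mulmx R _ _ _ _ (K1 R _ B D) _ _ _ (dX u v).
have e2 := derive_mulmx R _ _ _ _ (K2 R _ B D) _ _ _ (da u v).
rewrite derive_cst deriveD; first last.
- exact: e2.1.
- exact: e1.1.
by rewrite e1.2 e2.2.
Qed.


Lemma courant_V m (B D : 'M[R]_m) : (D *m B)^T = - (D *m B) ->
  forall X a Y b : 'cV[R]_m -> 'cV[R]_m,
  smooth X -> smooth a -> smooth Y -> smooth b ->
  (forall u, Vset R _ B D (X u, a u)) -> (forall u, Vset R _ B D (Y u, b u)) ->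
  forall u, Vset R _ B D (courant X a Y b u).
Proof.
move=> anti X a Y b sX sa sY sb hXa hYb u.
have dX := smooth_der _ _ sX; have da := smooth_der _ _ sa.
have dY := smooth_der _ _ sY; have db := smooth_der _ _ sb.
have VX := der_V _ B D X a dX da hXa; have VY := der_V _ B D Y b dY db hYb.
have iso := Vset_iso R _ B D anti.
suff -> : courant X a Y b u =
    ('D_(X u) Y u - 'D_(Y u) X u, 'D_(X u) b u - 'D_(Y u) a u).
  case: (VY u (X u)) => z1 [e1 e2]; case: (VX u (Y u)) => z2 [e3 e4].
  by exists (z1 - z2); rewrite e1 e2 e3 e4 !mulmxBr.
rewrite /courant /lie_bracket; congr pair.
have Df e : 'D_e (fun v => (contr (a v) (Y v) - contr (b v) (X v) : R^o)) u =
    contr (a u) ('D_e Y u) + contr ('D_e a u) (Y u)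
    - (contr (b u) ('D_e X u) + contr ('D_e b u) (X u)).
  have c1 := derive_contr R _ _ a Y u e (da u e) (dY u e).
  have c2 := derive_contr R _ _ b X u e (db u e) (dX u e).
  have -> : (fun v => (contr (a v) (Y v) - contr (b v) (X v) : R^o)) =
     (fun v => contr (a v) (Y v) : R^o) - (fun v => contr (b v) (X v) : R^o).
    by apply/funext.
  by rewrite deriveB ?c1.2 ?c2.2 //; [exact: c1.1 | exact: c2.1].
apply/matrixP => i j; rewrite (ord1 j) {j}.
rewrite /lie_der1 /dfun !mxE Df.
have i1 := iso (X u, a u) ('D_(ebasis R i) Y u, 'D_(ebasis R i) b u) (hXa u) (VY u _).
have i2 := iso (Y u, b u) ('D_(ebasis R i) X u, 'D_(ebasis R i) a u) (hYb u) (VX u _).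
simpl in i1, i2.
lra.
Qed.


Lemma subbundle_LBD m (B D : 'M[R]_m) : smooth_subbundle (LBD B D).
Proof.
split.
  move=> u; split; first by exists 0; rewrite !mulmx0 !scaler0.
  split.
    move=> p1 p2 [z1 ->] [z2 ->] /=; exists (z1 + z2).
    by rewrite !mulmxDr !scalerDr.
  move=> c p [z ->] /=; exists (c *: z).
  by rewrite -!scalemxAr !scalerA mulrC.
move=> u0; exists setT; split; first exact: openT.
split => //; exists (\rank (Mm R _ B D)), (fun i _ => frame R _ B D i).
split; first by move=> i; split; apply: smooth_cst.
move=> u _; split; last exact: indep_frame.
by move=> p; rewrite LBD_V; exact: span_frame.
Qed.

End Main.

Theorem theorem4p6 (R : realType) (m : nat) (A : 'M[R]_m.+1) (q : 'cV[R]_m.+1)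
    (D : 'M[R]_m) :
  (0 < m)%N ->
  formal_equilibrium A q ->
  (D *m Bmat A)^T = - (D *m Bmat A) ->
  is_diag_mx ((D^T) *m Q1 q) ->
  big_isotropic (LBD (Bmat A) D) /\
  ((forall z : 'cV[R]_m, Bmat A *m z = 0 -> D^T *m z = 0 -> z = 0) ->
     dirac_structure (LBD (Bmat A) D)) /\
  hamiltonian (LBD (Bmat A) D) (Ytilde A q) (HD D q).
Proof.
move=> _ _ anti hd.
set B := Bmat A.
have iso : forall u, isotropic_set (LBD B D u).
  move=> u p1 p2 /LBD_V h1 /LBD_V h2.
  by rewrite /pairing (Vset_iso R _ B D anti _ _ h1 h2) mul0r.
have cc : courant_closed (LBD B D).
  move=> X a Y b sX sa sY sb h1 h2 u; apply/LBD_V.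
  apply: (courant_V R _ B D anti X a Y b sX sa sY sb) => x; apply/(LBD_V R _ B D x); [exact: h1 | exact: h2].
split; first by split; [exact: subbundle_LBD | split].
split; last exact: ham_part.
move=> inj; split; first exact: subbundle_LBD.
split => //.
move=> u; split => // W' _ isoW sub.
apply/seteqP; split => p; last exact: sub.
move=> Wp; apply/LBD_V; apply: (Vmax R _ B D anti inj) => z.
have Lz : LBD B D u (B *m z, D^T *m z) by apply/LBD_V; exists z.
have := isoW p (B *m z, D^T *m z) Wp (sub _ Lz); rewrite /pairing /=.
lra.
Qed.
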